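(* Let $(X,d)$ be a bicomplete quasi-pseudometric space. Let $J:X\to X$ be a continuous single-valued map such that $r\,d(x,y)\le d(Jx,Jy)$ for all $x,y\in X$, for some constant $r>0$. Let $F:X\to CB(X)$ be a set-valued map such that $$H(Fx,Fy)\le \alpha\big[d(Jx,Fx)+d(Jy,Fy)\big]\quad\text{for all }x,y\in X,$$ where $\alpha\in(0,1/2)$. If $J$ and $F$ have the approximate mix-point property, then $F$ has a $J$-fixed point, i.e. there is $x\in X$ with $Jx\in Fx$.
   Context: A quasi-pseudometric on a nonempty set $X$ is a map $d:X\times X\to[0,\infty)$ with $d(x,x)=0$ and $d(x,z)\le d(x,y)+d(y,z)$ for all $x,y,z$; it is $T_0$ if $d(x,y)=0=d(y,x)$ implies $x=y$. Write $d^s(x,y)=\max\{d(x,y),d(y,x)\}$. The space $(X,d)$ is bicomplete if $d$ is $T_0$ and the metric $d^s$ is complete. For $x\in X$ and nonempty $A\subseteq X$: $d(x,A)=\inf_{a\in A}d(x,a)$, $d(A,x)=\inf_{a\in A}d(a,x)$. For nonempty $A,B\subseteq X$: $H(A,B)=\max\{\sup_{a\in A}d(a,B),\ \sup_{b\in B}d(A,b)\}$. $CB(X)$ denotes the family of nonempty $d^s$-bounded, $\tau(d^s)$-closed subsets of $X$; continuity of $J$ is with respect to $\tau(d^s)$. $J$ and $F$ have the approximate mix-point property if $\inf_{x\in X}\sup_{y\in Fx}d^s(Jx,y)=0$. *)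

(* Defs.v *)
From Stdlib Require Import Reals Lra Classical ClassicalEpsilon.
Open Scope R_scope.
Set Implicit Arguments.

(** Infimum / supremum of a set of reals (classically chosen; 0 if it does not exist). *)
Definition is_inf (E : R -> Prop) (l : R) : Prop :=
  (forall y, E y -> l <= y) /\ (forall l', (forall y, E y -> l' <= y) -> l' <= l).
Definition is_sup (E : R -> Prop) (l : R) : Prop :=
  (forall y, E y -> y <= l) /\ (forall l', (forall y, E y -> y <= l') -> l <= l').

Definition Rinf (E : R -> Prop) : R :=
  match excluded_middle_informative (exists l, is_inf E l) with
  | left h => proj1_sig (constructive_indefinite_description _ h)
  | right _ => 0
  end.
Definition Rsup (E : R -> Prop) : R :=
  match excluded_middle_informative (exists l, is_sup E l) with
  | left h => proj1_sig (constructive_indefinite_description _ h)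
  | right _ => 0
  end.

Section QPM.
Variable X : Type.
Variable d : X -> X -> R.

Definition quasi_pseudometric : Prop :=
  (forall x y, 0 <= d x y) /\ (forall x, d x x = 0) /\
  (forall x y z, d x z <= d x y + d y z).

Definition T0 : Prop := forall x y, d x y = 0 -> d y x = 0 -> x = y.

Definition ds (x y : X) : R := Rmax (d x y) (d y x).

Definition ds_cauchy (u : nat -> X) : Prop :=
  forall eps, eps > 0 -> exists N, forall m n, (m >= N)%nat -> (n >= N)%nat -> ds (u m) (u n) < eps.
Definition ds_converges (u : nat -> X) (l : X) : Prop :=
  forall eps, eps > 0 -> exists N, forall n, (n >= N)%nat -> ds (u n) l < eps.

Definition bicomplete : Prop :=
  T0 /\ forall u, ds_cauchy u -> exists l, ds_converges u l.

Definition d_pt_set (x : X) (A : X -> Prop) : R := Rinf (fun t => exists a, A a /\ t = d x a).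
Definition d_set_pt (A : X -> Prop) (x : X) : R := Rinf (fun t => exists a, A a /\ t = d a x).
Definition Hd (A B : X -> Prop) : R :=
  Rmax (Rsup (fun t => exists a, A a /\ t = d_pt_set a B))
       (Rsup (fun t => exists b, B b /\ t = d_set_pt A b)).

Definition ds_closed (A : X -> Prop) : Prop :=
  forall x, (forall eps, eps > 0 -> exists a, A a /\ ds x a < eps) -> A x.
Definition in_CB (A : X -> Prop) : Prop :=
  (exists a, A a) /\ (exists M, forall a b, A a -> A b -> ds a b <= M) /\ ds_closed A.

Definition ds_continuous (J : X -> X) : Prop :=
  forall x eps, eps > 0 -> exists delta, delta > 0 /\
    forall y, ds x y < delta -> ds (J x) (J y) < eps.

Definition approx_mix_point (J : X -> X) (F : X -> X -> Prop) : Prop :=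
  Rinf (fun t => exists x, t = Rsup (fun s => exists y, F x y /\ s = ds (J x) y)) = 0.
End QPM.

(* Main.v *)
Require Import Defs.
From Stdlib Require Import Reals Lra Classical ClassicalEpsilon.
Open Scope R_scope.

Lemma inf_ex (E : R -> Prop) : (exists y, E y) -> (forall y, E y -> 0 <= y) -> exists l, is_inf E l.
Proof.
  intros [y0 Hy0] Hlb.
  set (E' := fun z => E (- z)).
  assert (Hb : bound E'). { exists 0. intros z Hz. unfold E' in Hz. specialize (Hlb _ Hz). lra. }
  assert (He : exists z, E' z). { exists (- y0). unfold E'. rewrite Ropp_involutive. auto. }
  destruct (completeness E' Hb He) as [m [Hm1 Hm2]].
  exists (- m). split.
  - intros y Hy. assert (H : E' (- y)) by (unfold E'; rewrite Ropp_involutive; auto).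
    specialize (Hm1 _ H). lra.
  - intros l' Hl'. assert (m <= - l').
    { apply Hm2. intros z Hz. specialize (Hl' _ Hz). lra. } lra.
Qed.

Lemma sup_ex (E : R -> Prop) M : (exists y, E y) -> (forall y, E y -> y <= M) -> exists l, is_sup E l.
Proof.
  intros He Hub.
  assert (Hb : bound E). { exists M. intros z Hz. auto. }
  destruct (completeness E Hb He) as [m [Hm1 Hm2]].
  exists m. split; [exact Hm1|]. intros l' Hl'. apply Hm2. intros z Hz. auto.
Qed.

Lemma Rinf_spec E : (exists y, E y) -> (forall y, E y -> 0 <= y) -> is_inf E (Rinf E).
Proof.
  intros H1 H2. unfold Rinf. destruct (excluded_middle_informative _) as [h|h].
  - destruct (constructive_indefinite_description _ h) as [l Hl]. simpl. exact Hl.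
  - exfalso. apply h. apply inf_ex; auto.
Qed.

Lemma Rsup_spec E M : (exists y, E y) -> (forall y, E y -> y <= M) -> is_sup E (Rsup E).
Proof.
  intros H1 H2. unfold Rsup. destruct (excluded_middle_informative _) as [h|h].
  - destruct (constructive_indefinite_description _ h) as [l Hl]. simpl. exact Hl.
  - exfalso. apply h. eapply sup_ex; eauto.
Qed.

Lemma inf_approx E l : is_inf E l -> forall eps, eps > 0 -> exists y, E y /\ y < l + eps.
Proof.
  intros [H1 H2] eps Heps. apply NNPP. intro Hn.
  assert (l + eps <= l).
  { apply H2. intros y Hy. apply Rnot_lt_le. intro. apply Hn. eauto. }
  lra.
Qed.

Lemma aux_al alpha a b : 0 < alpha < 1/2 -> 0 <= a -> a <= b -> alpha * a <= b.
Proof. intros. nra. Qed.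

Section S.
End S.

Lemma ds_nonneg X (d : X -> X -> R) : quasi_pseudometric d -> forall x y, 0 <= ds d x y.
Proof. intros [H0 _] x y. unfold ds. pose proof (H0 x y). pose proof (Rmax_l (d x y) (d y x)). lra. Qed.

Lemma ds_sym X (d : X -> X -> R) x y : ds d x y = ds d y x.
Proof. unfold ds. apply Rmax_comm. Qed.

Lemma d_le_ds X (d : X -> X -> R) x y : d x y <= ds d x y.
Proof. unfold ds. apply Rmax_l. Qed.

Lemma d_le_ds' X (d : X -> X -> R) x y : d y x <= ds d x y.
Proof. unfold ds. apply Rmax_r. Qed.

Lemma ds_tri X (d : X -> X -> R) : quasi_pseudometric d -> forall x y z, ds d x z <= ds d x y + ds d y z.
Proof.
  intros [_ [_ Ht]] x y z. unfold ds.
  pose proof (Ht x y z). pose proof (Ht z y x).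
  pose proof (Rmax_l (d x y) (d y x)). pose proof (Rmax_r (d x y) (d y x)).
  pose proof (Rmax_l (d y z) (d z y)). pose proof (Rmax_r (d y z) (d z y)).
  apply Rmax_lub; lra.
Qed.

Lemma dps_spec X (d : X -> X -> R) x A : quasi_pseudometric d -> (exists a, A a) ->
  is_inf (fun t => exists a, A a /\ t = d x a) (d_pt_set d x A).
Proof.
  intros [H0 _] [a Ha]. apply Rinf_spec.
  - exists (d x a). eauto.
  - intros y [b [_ ->]]. auto.
Qed.

Lemma dsp_spec X (d : X -> X -> R) x A : quasi_pseudometric d -> (exists a, A a) ->
  is_inf (fun t => exists a, A a /\ t = d a x) (d_set_pt d A x).
Proof.
  intros [H0 _] [a Ha]. apply Rinf_spec.
  - exists (d a x). eauto.
  - intros y [b [_ ->]]. auto.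
Qed.

Lemma Hd_bounds X (d : X -> X -> R) A B : quasi_pseudometric d -> in_CB d A -> in_CB d B ->
  (forall a, A a -> d_pt_set d a B <= Hd d A B) /\ (forall b, B b -> d_set_pt d A b <= Hd d A B).
Proof.
  intros Hq [[a0 Ha0] [[MA HMA] _]] [[b0 Hb0] [[MB HMB] _]].
  pose proof Hq as [H0 [_ Ht]].
  split.
  - intros a Ha.
    assert (Hs : is_sup (fun t => exists a, A a /\ t = d_pt_set d a B)
                   (Rsup (fun t => exists a, A a /\ t = d_pt_set d a B))).
    { apply Rsup_spec with (M := MA + d a0 b0).
      - exists (d_pt_set d a0 B). eauto.
      - intros y [a' [Ha' ->]].
        destruct (dps_spec _ _ a' _ Hq (ex_intro _ b0 Hb0)) as [Hlb _].
        pose proof (Hlb (d a' b0) (ex_intro _ b0 (conj Hb0 eq_refl))).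
        pose proof (Ht a' a0 b0). pose proof (HMA a' a0 Ha' Ha0).
        pose proof (d_le_ds _ d a' a0). lra. }
    destruct Hs as [Hs _]. pose proof (Hs _ (ex_intro _ a (conj Ha eq_refl))).
    unfold Hd. pose proof (Rmax_l (Rsup (fun t => exists a, A a /\ t = d_pt_set d a B))
       (Rsup (fun t => exists b, B b /\ t = d_set_pt d A b))). lra.
  - intros b Hb.
    assert (Hs : is_sup (fun t => exists b, B b /\ t = d_set_pt d A b)
                   (Rsup (fun t => exists b, B b /\ t = d_set_pt d A b))).
    { apply Rsup_spec with (M := d a0 b0 + MB).
      - exists (d_set_pt d A b0). eauto.
      - intros y [b' [Hb' ->]].
        destruct (dsp_spec _ _ b' _ Hq (ex_intro _ a0 Ha0)) as [Hlb _].
        pose proof (Hlb (d a0 b') (ex_intro _ a0 (conj Ha0 eq_refl))).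
        pose proof (Ht a0 b0 b'). pose proof (HMB b0 b' Hb0 Hb').
        pose proof (d_le_ds _ d b0 b'). lra. }
    destruct Hs as [Hs _]. pose proof (Hs _ (ex_intro _ b (conj Hb eq_refl))).
    unfold Hd. pose proof (Rmax_r (Rsup (fun t => exists a, A a /\ t = d_pt_set d a B))
       (Rsup (fun t => exists b, B b /\ t = d_set_pt d A b))). lra.
Qed.

Lemma mix_lemma X (d : X -> X -> R) (J : X -> X) (F : X -> X -> Prop) :
  inhabited X -> quasi_pseudometric d -> (forall x, in_CB d (F x)) -> approx_mix_point d J F ->
  forall eps, eps > 0 -> exists x, forall y, F x y -> ds d (J x) y < eps.
Proof.
  intros [x0] Hq HF Hm eps Heps.
  assert (Hsx : forall x, is_sup (fun s => exists y, F x y /\ s = ds d (J x) y)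
                               (Rsup (fun s => exists y, F x y /\ s = ds d (J x) y))).
  { intros x. destruct (HF x) as [[a0 Ha0] [[M HM] _]].
    apply Rsup_spec with (M := ds d (J x) a0 + M).
    - exists (ds d (J x) a0). eauto.
    - intros y [b [Hb ->]]. pose proof (ds_tri _ _ Hq (J x) a0 b). pose proof (HM a0 b Ha0 Hb). lra. }
  assert (Hinf : is_inf (fun t => exists x, t = Rsup (fun s => exists y, F x y /\ s = ds d (J x) y))
       (Rinf (fun t => exists x, t = Rsup (fun s => exists y, F x y /\ s = ds d (J x) y)))).
  { apply Rinf_spec.
    - eexists. exists x0. reflexivity.
    - intros y [x ->]. destruct (HF x) as [[a0 Ha0] _].
      destruct (Hsx x) as [Hs _]. pose proof (Hs _ (ex_intro _ a0 (conj Ha0 eq_refl))).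
      pose proof (ds_nonneg _ _ Hq (J x) a0). lra. }
  unfold approx_mix_point in Hm. rewrite Hm in Hinf.
  destruct (inf_approx _ _ Hinf eps Heps) as [t [[x ->] Ht]].
  exists x. intros y Hy. destruct (Hsx x) as [Hs _].
  pose proof (Hs _ (ex_intro _ y (conj Hy eq_refl))). lra.
Qed.

Lemma e_small c : 0 < c -> exists N, forall n, (n >= N)%nat -> / (INR n + 1) < c.
Proof.
  intros Hc. destruct (archimed_cor1 c Hc) as [N [HN HN0]].
  exists N. intros n Hn.
  assert (INR N <= INR n) by (apply le_INR; auto).
  assert (0 < INR N) by (apply lt_0_INR; auto).
  assert (/ (INR n + 1) < / INR N) by (apply Rinv_lt_contravar; nra).
  lra.
Qed.

Lemma close_lemma X (d : X -> X -> R) (J : X -> X) (F : X -> X -> Prop) alpha :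
  quasi_pseudometric d -> (forall x, in_CB d (F x)) -> 0 < alpha < 1/2 ->
  (forall x y, Hd d (F x) (F y) <= alpha * (d_pt_set d (J x) (F x) + d_pt_set d (J y) (F y))) ->
  forall x x' e1 e2, 0 < e1 -> 0 < e2 ->
  (forall y, F x y -> ds d (J x) y < e1) -> (forall y, F x' y -> ds d (J x') y < e2) ->
  d (J x) (J x') < 3 * (e1 + e2).
Proof.
  intros Hq HFcb Ha HF x x' e1 e2 He1 He2 P1 P2.
  pose proof Hq as [H0 [_ Ht]].
  destruct (HFcb x) as [[a0 Ha0] _].
  destruct (HFcb x') as [[b0 Hb0] _].
  destruct (dps_spec _ _ (J x) _ Hq (ex_intro _ a0 Ha0)) as [L1 G1].
  destruct (dps_spec _ _ (J x') _ Hq (ex_intro _ b0 Hb0)) as [L2 G2].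
  pose proof (L1 _ (ex_intro _ a0 (conj Ha0 eq_refl))).
  pose proof (L2 _ (ex_intro _ b0 (conj Hb0 eq_refl))).
  pose proof (P1 a0 Ha0). pose proof (P2 b0 Hb0).
  pose proof (d_le_ds _ d (J x) a0). pose proof (d_le_ds _ d (J x') b0).
  assert (N1 : 0 <= d_pt_set d (J x) (F x)) by (apply G1; intros y [b [_ ->]]; auto).
  assert (N2 : 0 <= d_pt_set d (J x') (F x')) by (apply G2; intros y [b [_ ->]]; auto).
  pose proof (HF x x').
  destruct (Hd_bounds _ d _ _ Hq (HFcb x) (HFcb x')) as [B1 _].
  pose proof (B1 a0 Ha0).
  destruct (inf_approx _ _ (dps_spec _ _ a0 _ Hq (ex_intro _ b0 Hb0)) e1 He1) as [t [[b [Hb ->]] Hlt]].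
  pose proof (P2 b Hb). pose proof (d_le_ds' _ d (J x') b).
  pose proof (Ht (J x) a0 (J x')). pose proof (Ht a0 b (J x')).
  assert (alpha * (d_pt_set d (J x) (F x) + d_pt_set d (J x') (F x')) <= e1 + e2)
    by (apply aux_al; lra).
  lra.
Qed.

Lemma close_ds X (d : X -> X -> R) (J : X -> X) (F : X -> X -> Prop) alpha :
  quasi_pseudometric d -> (forall x, in_CB d (F x)) -> 0 < alpha < 1/2 ->
  (forall x y, Hd d (F x) (F y) <= alpha * (d_pt_set d (J x) (F x) + d_pt_set d (J y) (F y))) ->
  forall x x' e1 e2, 0 < e1 -> 0 < e2 ->
  (forall y, F x y -> ds d (J x) y < e1) -> (forall y, F x' y -> ds d (J x') y < e2) ->
  ds d (J x) (J x') < 3 * (e1 + e2).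
Proof.
  intros. unfold ds. apply Rmax_lub_lt.
  - eapply close_lemma; eauto.
  - replace (3 * (e1 + e2)) with (3 * (e2 + e1)) by ring. eapply close_lemma; eauto.
Qed.

Theorem mainTheorem7 (X : Type) (d : X -> X -> R) (J : X -> X) (F : X -> X -> Prop)
  (r alpha : R)
  (HX : inhabited X)
  (Hqpm : quasi_pseudometric d)
  (Hbic : bicomplete d)
  (HJc : ds_continuous d J)
  (Hr : 0 < r)
  (HJr : forall x y, r * d x y <= d (J x) (J y))
  (HFcb : forall x, in_CB d (F x))
  (Halpha : 0 < alpha < 1 / 2)
  (HF : forall x y, Hd d (F x) (F y) <= alpha * (d_pt_set d (J x) (F x) + d_pt_set d (J y) (F y)))
  (Hmix : approx_mix_point d J F) :
  exists x, F x (J x).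
Proof.
  pose proof Hqpm as [Hd0 [Hdxx Htri]].
  set (e := fun n : nat => / (INR n + 1)).
  assert (Hep : forall n, 0 < e n).
  { intros n. unfold e. apply Rinv_0_lt_compat. pose proof (pos_INR n). lra. }
  assert (Hes : forall c, 0 < c -> exists N, forall n, (n >= N)%nat -> e n < c).
  { intros c Hc. destruct (e_small c Hc) as [N HN]. exists N. exact HN. }
  assert (Hch : forall n, exists x, forall y, F x y -> ds d (J x) y < e n).
  { intros n. apply (mix_lemma X d J F HX Hqpm HFcb Hmix). apply Hep. }
  set (xs := fun n => proj1_sig (constructive_indefinite_description _ (Hch n))).
  assert (Pxs : forall n y, F (xs n) y -> ds d (J (xs n)) y < e n).
  { intros n. unfold xs. destruct (constructive_indefinite_description _ (Hch n)) as [x Hx]. exact Hx. }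
  assert (Hc : ds_cauchy d xs).
  { intros eps Heps.
    destruct (Hes (eps * r / 6)) as [N HN]. { nra. }
    exists N. intros m n Hm Hn.
    pose proof (close_ds X d J F alpha Hqpm HFcb Halpha HF (xs m) (xs n) (e m) (e n)
                  (Hep m) (Hep n) (Pxs m) (Pxs n)) as C1.
    pose proof (close_ds X d J F alpha Hqpm HFcb Halpha HF (xs n) (xs m) (e n) (e m)
                  (Hep n) (Hep m) (Pxs n) (Pxs m)) as C2.
    pose proof (HN m Hm). pose proof (HN n Hn).
    pose proof (HJr (xs m) (xs n)). pose proof (HJr (xs n) (xs m)).
    pose proof (d_le_ds _ d (J (xs m)) (J (xs n))). pose proof (d_le_ds _ d (J (xs n)) (J (xs m))).
    assert (r * d (xs m) (xs n) < r * eps) by lra.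
    assert (r * d (xs n) (xs m) < r * eps) by lra.
    unfold ds. apply Rmax_lub_lt; apply Rmult_lt_reg_l with r; lra. }
  destruct Hbic as [HT0 Hcomp].
  destruct (Hcomp xs Hc) as [u Hu].
  assert (HJu : forall eps, eps > 0 -> exists N, forall n, (n >= N)%nat -> ds d (J u) (J (xs n)) < eps).
  { intros eps Heps. destruct (HJc u eps Heps) as [delta [Hdel Hdel']].
    destruct (Hu delta Hdel) as [N HN]. exists N. intros n Hn.
    apply Hdel'. rewrite ds_sym. auto. }
  destruct (HFcb u) as [[a0 Ha0] _].
  set (D := d_pt_set d (J u) (F u)).
  destruct (dps_spec _ _ (J u) _ Hqpm (ex_intro _ a0 Ha0)) as [LD GD].
  assert (HD0 : 0 <= D) by (apply GD; intros y [b [_ ->]]; auto).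
  assert (HDb : forall n, D <= 2 * (ds d (J u) (J (xs n)) + 3 * e n)).
  { intros n. destruct (HFcb (xs n)) as [[c0 Hc0] _].
    destruct (dps_spec _ _ (J (xs n)) _ Hqpm (ex_intro _ c0 Hc0)) as [L1 G1].
    pose proof (L1 _ (ex_intro _ c0 (conj Hc0 eq_refl))).
    pose proof (Pxs n c0 Hc0). pose proof (d_le_ds _ d (J (xs n)) c0).
    assert (N1 : 0 <= d_pt_set d (J (xs n)) (F (xs n))) by (apply G1; intros y [b [_ ->]]; auto).
    pose proof (HF (xs n) u).
    destruct (Hd_bounds _ d _ _ Hqpm (HFcb (xs n)) (HFcb u)) as [B1 _].
    pose proof (B1 c0 Hc0).
    destruct (inf_approx _ _ (dps_spec _ _ c0 _ Hqpm (ex_intro _ a0 Ha0)) (e n) (Hep n))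
      as [t [[b [Hb ->]] Hlt]].
    pose proof (LD _ (ex_intro _ b (conj Hb eq_refl))).
    pose proof (Htri (J u) (J (xs n)) b). pose proof (Htri (J (xs n)) c0 b).
    pose proof (d_le_ds _ d (J u) (J (xs n))).
    pose proof (Hep n).
    repeat match goal with H : context[d_pt_set d (J u) (F u)] |- _ => change (d_pt_set d (J u) (F u)) with D in H end.
    assert (alpha * (d_pt_set d (J (xs n)) (F (xs n)) + D) <= alpha * (e n + D)).
    { apply Rmult_le_compat_l; lra. }
    nra. }
  (* every point of F u is at ds-distance 0 from J u *)
  assert (Hy : forall y, F u y -> forall n, ds d (J u) y < 9 * (ds d (J u) (J (xs n)) + e n)).
  { intros y Hyu n.
    destruct (HFcb (xs n)) as [[c0 Hc0] _].
    destruct (dps_spec _ _ (J (xs n)) _ Hqpm (ex_intro _ c0 Hc0)) as [L1 G1].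
    pose proof (L1 _ (ex_intro _ c0 (conj Hc0 eq_refl))).
    pose proof (Pxs n c0 Hc0). pose proof (d_le_ds _ d (J (xs n)) c0).
    assert (N1 : 0 <= d_pt_set d (J (xs n)) (F (xs n))) by (apply G1; intros z [b [_ ->]]; auto).
    pose proof (HDb n). pose proof (Hep n).
    assert (Hdl1 : d (J u) (J (xs n)) <= ds d (J u) (J (xs n))) by apply d_le_ds.
    assert (Hdl2 : d (J (xs n)) (J u) <= ds d (J u) (J (xs n))) by apply d_le_ds'.
    pose proof (ds_nonneg _ _ Hqpm (J u) (J (xs n))).
    assert (Hal : alpha * (D + d_pt_set d (J (xs n)) (F (xs n))) <= D + e n) by (apply aux_al; lra).
    assert (Hal' : alpha * (d_pt_set d (J (xs n)) (F (xs n)) + D) <= D + e n) by (apply aux_al; lra).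
    unfold ds at 1. apply Rmax_lub_lt.
    -
      pose proof (HF (xs n) u). repeat match goal with H : context[d_pt_set d (J u) (F u)] |- _ => change (d_pt_set d (J u) (F u)) with D in H end.
      destruct (Hd_bounds _ d _ _ Hqpm (HFcb (xs n)) (HFcb u)) as [_ B2].
      pose proof (B2 y Hyu).
      destruct (inf_approx _ _ (dsp_spec _ _ y _ Hqpm (ex_intro _ c0 Hc0)) (e n) (Hep n))
        as [t [[c [Hc' ->]] Hlt]].
      pose proof (Pxs n c Hc'). pose proof (d_le_ds _ d (J (xs n)) c).
      pose proof (Htri (J u) (J (xs n)) y). pose proof (Htri (J (xs n)) c y).
      lra.
    -
      pose proof (HF u (xs n)). repeat match goal with H : context[d_pt_set d (J u) (F u)] |- _ => change (d_pt_set d (J u) (F u)) with D in H end.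
      destruct (Hd_bounds _ d _ _ Hqpm (HFcb u) (HFcb (xs n))) as [B1 _].
      pose proof (B1 y Hyu).
      destruct (inf_approx _ _ (dps_spec _ _ y _ Hqpm (ex_intro _ c0 Hc0)) (e n) (Hep n))
        as [t [[c [Hc' ->]] Hlt]].
      pose proof (Pxs n c Hc'). pose proof (d_le_ds' _ d (J (xs n)) c).
      pose proof (Htri y (J (xs n)) (J u)). pose proof (Htri y c (J (xs n))).
      lra. }
  assert (Hzero : ds d (J u) a0 <= 0).
  { apply Rnot_lt_le. intro Hpos.
    destruct (HJu (ds d (J u) a0 / 18)) as [N1 HN1]. { lra. }
    destruct (Hes (ds d (J u) a0 / 18)) as [N2 HN2]. { lra. }
    pose proof (Hy a0 Ha0 (max N1 N2)).
    pose proof (HN1 (max N1 N2) (Nat.le_max_l _ _)).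
    pose proof (HN2 (max N1 N2) (Nat.le_max_r _ _)).
    lra. }
  exists u.
  assert (J u = a0).
  { apply HT0.
    - pose proof (d_le_ds _ d (J u) a0). pose proof (Hd0 (J u) a0). lra.
    - pose proof (d_le_ds' _ d (J u) a0). pose proof (Hd0 a0 (J u)). lra. }
  rewrite H. exact Ha0.
Qed.
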